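(* Let $m\ge1$ and let $\pi\in\mathfrak{S}_{3m}$ avoid $132$ and consist only of $3$-cycles, with element sets $\{a_i<b_i<c_i\}$, $i=1,\dots,m$, indexed so that $b_1<\dots<b_m$. Let $A=\{a_i\}$, $B=\{b_i\}$, let $D_\pi$ be the associated Dyck word and $X=(x_1,\dots,x_k)$ its free composition. Write $A=\bigcup_{j=1}^k A_j$ and $B=\bigcup_{j=1}^k B_j$, where the $A_j$ are consecutive (in the increasing order of $A$) subsets with every element of $A_j$ less than every element of $A_{j+1}$ and $|A_j|=x_{k-j+1}$, and the $B_j$ are consecutive subsets with every element of $B_j$ less than every element of $B_{j+1}$ and $|B_j|=x_j$. Then for every $i$ and $j$, if $b_i\in B_j$ then $a_i\in A_{k-j+1}$.
   Context: A permutation avoids $132$ if there are no indices $i<j<k$ with $\pi_i<\pi_k<\pi_j$. With $C=\{c_i\}$, the associated Dyck word $D_\pi$ is the word of length $2m$ obtained by listing the elements of $B\cup C$ in increasing order and writing $0$ for each element of $B$ and $1$ for each element of $C$. For a Dyck word $D$ of semilength $m$: indices $i,i+1$ are linked if the $i$-th and $(i+1)$-st $0$ of $D$ occupy adjacent positions and the $i$-th and $(i+1)$-st $1$ occupy adjacent positions; the free blocks are the maximal intervals of $\{1,\dots,m\}$ in which all consecutive indices are linked; the free composition $(x_1,\dots,x_k)$ lists the sizes of the free blocks from left to right. *)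

(* Defs.v *)
From mathcomp Require Import all_boot all_order all_fingroup.
Set Implicit Arguments. Unset Strict Implicit. Unset Printing Implicit Defensive.

(* One-line notation: pi_i = pi i, positions 'I_n = {0,...,n-1}
   (shift of {1,...,n}; pattern avoidance is shift invariant). *)
Definition avoids132 (n : nat) (p : {perm 'I_n}) : Prop :=
  forall i j k : 'I_n, i < j -> j < k -> ~ (p i < p k /\ p k < p j).

Definition only3cycles (n : nat) (p : {perm 'I_n}) : Prop :=
  forall x : 'I_n, #|porbit p x| = 3.

Definition Aset (n : nat) (p : {perm 'I_n}) : {set 'I_n} :=
  [set x | [forall y in porbit p x, x <= y]].
Definition Bset (n : nat) (p : {perm 'I_n}) : {set 'I_n} :=
  [set x | [exists y in porbit p x, y < x] && [exists z in porbit p x, x < z]].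
Definition Cset (n : nat) (p : {perm 'I_n}) : {set 'I_n} :=
  [set x | [forall y in porbit p x, y <= x]].

Definition sorted_elems (n : nat) (S : {set 'I_n}) : seq 'I_n :=
  [seq x <- enum 'I_n | x \in S].

(* Dyck word D_pi: elements of B u C in increasing order, 0 (false) for B,
   1 (true) for C *)
Definition dyck_word (n : nat) (p : {perm 'I_n}) : seq bool :=
  [seq (x \in Cset p) | x <- sorted_elems (Bset p :|: Cset p)].

Definition semilength (D : seq bool) : nat := count negb D.

Definition zeros_pos (D : seq bool) : seq nat :=
  [seq q <- iota 0 (size D) | ~~ nth false D q].
Definition ones_pos (D : seq bool) : seq nat :=
  [seq q <- iota 0 (size D) | nth false D q].

(* linked D i : indices i+1, i+2 (1-based) are linked, i.e. the (i+1)-st and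
   (i+2)-nd 0 occupy adjacent positions and the (i+1)-st and (i+2)-nd 1
   occupy adjacent positions *)
Definition linked (D : seq bool) (i : nat) : bool :=
  (nth 0 (zeros_pos D) i.+1 == (nth 0 (zeros_pos D) i).+1) &&
  (nth 0 (ones_pos D) i.+1 == (nth 0 (ones_pos D) i).+1).

(* sizes of maximal runs: given the link bits between consecutive indices
   1..m, cut between i and i+1 exactly when they are not linked *)
Fixpoint comp_of (l : seq bool) (cur : nat) : seq nat :=
  match l with
  | [::] => [:: cur]
  | b :: l' => if b then comp_of l' cur.+1 else cur :: comp_of l' 1
  end.

Definition free_comp (D : seq bool) : seq nat :=
  comp_of [seq linked D i | i <- iota 0 (semilength D).-1] 1.

(* j-th (0-based) consecutive block of s when cut according to sizes X *)
Definition block (T : Type) (s : seq T) (X : seq nat) (j : nat) : seq T :=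
  take (nth 0 X j) (drop (sumn (take j X)) s).

(* Main.v *)
Require Import Defs.
From mathcomp Require Import all_boot all_order all_fingroup.
From mathcomp Require Import zify.
Set Implicit Arguments. Unset Strict Implicit. Unset Printing Implicit Defensive.

Definition cyc (n : nat) (p : {perm 'I_n}) (a b c : 'I_n) : Prop :=
  a < b /\ b < c /\ ((p a = b /\ p b = c /\ p c = a) \/ (p a = c /\ p c = b /\ p b = a)).

Definition disj (x y z x' y' z' : nat) : Prop :=
  x <> x' /\ x <> y' /\ x <> z' /\ y <> x' /\ y <> y' /\ y <> z' /\ z <> x' /\ z <> y' /\ z <> z'.

Lemma trich (x y : nat) : x < y \/ y < x \/ x = y.
Proof. by case: (ltngtP x y) => h; auto. Qed.

Lemma pw_c n (p : {perm 'I_n}) (H : avoids132 p) (a b c a2 b2 c2 : 'I_n)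
  (C0 : cyc p a b c) (C1 : cyc p a2 b2 c2)
  (D01 : disj a b c a2 b2 c2)
  (h_b_b2 : b < b2) :
  c < c2.
Proof.
unfold disj in *.
case: D01 => [d_a_a2 [d_a_b2 [d_a_c2 [d_b_a2 [d_b_b2 [d_b_c2 [d_c_a2 [d_c_b2 d_c_c2]]]]]]]].
(case: C0 => [h_a_b [h_b_c [[pa [pb pc]]|[pa [pc pb]]]]]; [ (case: C1 => [h_a2_b2 [h_b2_c2 [[pa2 [pb2 pc2]]|[pa2 [pc2 pb2]]]]]; [ (case: (trich a a2) => [h_a_a2|[h_a2_a|e]]; [ (case: (trich c c2) => [h_c_c2|[h_c2_c|e]]; [ exact: h_c_c2 | (exfalso; apply: (H a b b2 h_a_b h_b_b2); rewrite pa pb pb2; split; [exact: (ltn_trans h_b_b2 h_b2_c2) | exact: h_c2_c]) | by case: (d_c_c2 e) ]) | (case: (trich c c2) => [h_c_c2|[h_c2_c|e]]; [ exact: h_c_c2 | (exfalso; apply: (H a b b2 h_a_b h_b_b2); rewrite pa pb pb2; split; [exact: (ltn_trans h_b_b2 h_b2_c2) | exact: h_c2_c]) | by case: (d_c_c2 e) ]) | by case: (d_a_a2 e) ]) | (case: (trich a a2) => [h_a_a2|[h_a2_a|e]]; [ (exfalso; apply: (H a a2 c2 h_a_a2 (ltn_trans h_a2_b2 h_b2_c2)); rewrite pa pa2 pc2; split; [exact: h_b_b2 | exact: h_b2_c2]) | (case: (trich c c2) => [h_c_c2|[h_c2_c|e]]; [ exact: h_c_c2 | (exfalso; apply: (H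 a b c2 h_a_b (ltn_trans h_b_b2 h_b2_c2)); rewrite pa pb pc2; split; [exact: h_b_b2 | exact: (ltn_trans h_b2_c2 h_c2_c)]) | by case: (d_c_c2 e) ]) | by case: (d_a_a2 e) ]) ]) | (case: C1 => [h_a2_b2 [h_b2_c2 [[pa2 [pb2 pc2]]|[pa2 [pc2 pb2]]]]]; [ (case: (trich a a2) => [h_a_a2|[h_a2_a|e]]; [ (exfalso; apply: (H b b2 c2 h_b_b2 h_b2_c2); rewrite pb pb2 pc2; split; [exact: h_a_a2 | exact: (ltn_trans h_a2_b2 h_b2_c2)]) | (case: (trich c c2) => [h_c_c2|[h_c2_c|e]]; [ exact: h_c_c2 | (exfalso; apply: (H b b2 c h_b_b2 (ltn_trans h_b2_c2 h_c2_c)); rewrite pb pb2 pc; split; [exact: h_a_b | exact: (ltn_trans h_b_b2 h_b2_c2)]) | by case: (d_c_c2 e) ]) | by case: (d_a_a2 e) ]) | (case: (trich a a2) => [h_a_a2|[h_a2_a|e]]; [ (case: (trich c c2) => [h_c_c2|[h_c2_c|e]]; [ exact: h_c_c2 | (exfalso; apply: (H b c2 c (ltn_trans h_b_b2 h_b2_c2) h_c2_c); rewrite pb pc2 pc; split; [exact: h_a_b | exact: h_b_b2]) | by case: (d_c_c2 e) ]) | (case: (trich c c2) => [h_c_c2|[h_c2_c|e]]; [ exact: h_c_c2 | (exfalso; apply: (H b c2 c (ltn_trans h_b_b2 h_b2_c2) h_c2_c); rewrite pb pc2 pc; split; [exact: h_a_b | exact: h_b_b2]) | by case: (d_c_c2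 e) ]) | by case: (d_a_a2 e) ]) ]) ]).
Qed.

Lemma pw_i n (p : {perm 'I_n}) (H : avoids132 p) (a b c a2 b2 c2 : 'I_n)
  (C0 : cyc p a b c) (C1 : cyc p a2 b2 c2)
  (D01 : disj a b c a2 b2 c2)
  (h_b_b2 : b < b2) (h_a_a2 : a < a2) :
  b2 < c /\ a2 < b.
Proof.
unfold disj in *.
case: D01 => [d_a_a2 [d_a_b2 [d_a_c2 [d_b_a2 [d_b_b2 [d_b_c2 [d_c_a2 [d_c_b2 d_c_c2]]]]]]]].
(case: C0 => [h_a_b [h_b_c [[pa [pb pc]]|[pa [pc pb]]]]]; [ (case: C1 => [h_a2_b2 [h_b2_c2 [[pa2 [pb2 pc2]]|[pa2 [pc2 pb2]]]]]; [ (case: (trich c c2) => [h_c_c2|[h_c2_c|e]]; [ (case: (trich a2 b) => [h_a2_b|[h_b_a2|e]]; [ (case: (trich b2 c) => [h_b2_c|[h_c_b2|e]]; [ (split; [exact: h_b2_c | exact: h_a2_b]) | (exfalso; apply: (H a a2 b h_a_a2 h_a2_b); rewrite pa pa2 pb; split; [exact: h_b_c | exact: h_c_b2]) | by case: (d_c_b2 (esym e)) ]) | (exfalso; apply: (H a a2 c2 h_a_a2 (ltn_trans h_a2_b2 h_b2_c2)); rewrite pa pa2 pc2; split; [exact: h_b_a2 | exact: h_a2_b2]) | by case: (d_b_a2 (esym e)) ]) | (exfalso; apply: (H a b b2 h_a_b h_b_b2); rewrite pa pb pb2; split; [exact: (ltn_trans h_b_b2 h_b2_c2) | exact: h_c2_c])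 | by case: (d_c_c2 e) ]) | (exfalso; apply: (H a a2 c2 h_a_a2 (ltn_trans h_a2_b2 h_b2_c2)); rewrite pa pa2 pc2; split; [exact: h_b_b2 | exact: h_b2_c2]) ]) | (case: C1 => [h_a2_b2 [h_b2_c2 [[pa2 [pb2 pc2]]|[pa2 [pc2 pb2]]]]]; [ (exfalso; apply: (H b b2 c2 h_b_b2 h_b2_c2); rewrite pb pb2 pc2; split; [exact: h_a_a2 | exact: (ltn_trans h_a2_b2 h_b2_c2)]) | (case: (trich c c2) => [h_c_c2|[h_c2_c|e]]; [ (case: (trich a2 b) => [h_a2_b|[h_b_a2|e]]; [ (case: (trich b2 c) => [h_b2_c|[h_c_b2|e]]; [ (split; [exact: h_b2_c | exact: h_a2_b]) | (exfalso; apply: (H a a2 c2 h_a_a2 (ltn_trans h_a2_b2 h_b2_c2)); rewrite pa pa2 pc2; split; [exact: h_c_b2 | exact: h_b2_c2]) | by case: (d_c_b2 (esym e)) ]) | (exfalso; apply: (H b a2 b2 h_b_a2 h_a2_b2); rewrite pb pa2 pb2; split; [exact: h_a_a2 | exact: (ltn_trans h_a2_b2 h_b2_c2)]) | by case: (d_b_a2 (esym e)) ]) | (exfalso; apply: (H b c2 c (ltn_trans h_b_b2 h_b2_c2) h_c2_c); rewrite pb pc2 pc; split; [exact: h_a_b | exact: h_b_b2]) | by case: (d_c_c2 e) ]) ]) ]).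
Qed.

Lemma k2 n (p : {perm 'I_n}) (H : avoids132 p) (a b c a2 b2 c2 a3 b3 c3 : 'I_n)
  (C0 : cyc p a b c) (C1 : cyc p a2 b2 c2) (C2 : cyc p a3 b3 c3)
  (D01 : disj a b c a2 b2 c2) (D02 : disj a b c a3 b3 c3) (D12 : disj a2 b2 c2 a3 b3 c3)
  (h_b_b2 : b < b2) (h_a_a2 : a < a2) (h_b_c3 : b < c3) (h_c3_b2 : c3 < b2) :
  False.
Proof.
unfold disj in *.
case: D01 => [d_a_a2 [d_a_b2 [d_a_c2 [d_b_a2 [d_b_b2 [d_b_c2 [d_c_a2 [d_c_b2 d_c_c2]]]]]]]].
case: D02 => [d_a_a3 [d_a_b3 [d_a_c3 [d_b_a3 [d_b_b3 [d_b_c3 [d_c_a3 [d_c_b3 d_c_c3]]]]]]]].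
case: D12 => [d_a2_a3 [d_a2_b3 [d_a2_c3 [d_b2_a3 [d_b2_b3 [d_b2_c3 [d_c2_a3 [d_c2_b3 d_c2_c3]]]]]]]].
(case: C0 => [h_a_b [h_b_c [[pa [pb pc]]|[pa [pc pb]]]]]; [ (case: C1 => [h_a2_b2 [h_b2_c2 [[pa2 [pb2 pc2]]|[pa2 [pc2 pb2]]]]]; [ (case: C2 => [h_a3_b3 [h_b3_c3 [[pa3 [pb3 pc3]]|[pa3 [pc3 pb3]]]]]; [ (case: (trich a a3) => [h_a_a3|[h_a3_a|e]]; [ (case: (trich b b3) => [h_b_b3|[h_b3_b|e]]; [ (case: (trich c c2) => [h_c_c2|[h_c2_c|e]]; [ (case: (trich c c3) => [h_c_c3|[h_c3_c|e]]; [ (exfalso; apply: (H c b2 c2 (ltn_trans h_c_c3 h_c3_b2) h_b2_c2); rewrite pc pb2 pc2; split; [exact: h_a_a2 | exact: (ltn_trans h_a2_b2 h_b2_c2)]) | (exfalso; apply: (H a b b3 h_a_b h_b_b3); rewrite pa pb pb3; split; [exact: h_b_c3 | exact: h_c3_c]) | by case: (d_c_c3 e) ]) | (exfalso; apply: (H a b b2 h_a_b h_b_b2); rewrite pa pb pb2; split; [exact: (ltn_trans h_b_b2 h_b2_c2) | exact: h_c2_c]) | by case: (d_c_c2 e) ]) | (case: (trich c c2) => [h_c_c2|[h_c2_c|e]]; [ (case: (trich c c3) => [h_c_c3|[h_c3_c|e]]; [ (exfalso; apply: (H a b3 b (ltn_trans h_a_a3 h_a3_b3) h_b3_b); rewrite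 pa pb3 pb; split; [exact: h_b_c | exact: h_c_c3]) | (case: (trich a2 b) => [h_a2_b|[h_b_a2|e]]; [ (case: (trich a2 a3) => [h_a2_a3|[h_a3_a2|e]]; [ (exfalso; apply: (H a a2 b3 h_a_a2 (ltn_trans h_a2_a3 h_a3_b3)); rewrite pa pa2 pb3; split; [exact: h_b_c3 | exact: h_c3_b2]) | (exfalso; apply: (H c3 b2 c2 h_c3_b2 h_b2_c2); rewrite pc3 pb2 pc2; split; [exact: h_a3_a2 | exact: (ltn_trans h_a2_b2 h_b2_c2)]) | by case: (d_a2_a3 e) ]) | (exfalso; apply: (H a a2 c2 h_a_a2 (ltn_trans h_a2_b2 h_b2_c2)); rewrite pa pa2 pc2; split; [exact: h_b_a2 | exact: h_a2_b2]) | by case: (d_b_a2 (esym e)) ]) | by case: (d_c_c3 e) ]) | (exfalso; apply: (H a b b2 h_a_b h_b_b2); rewrite pa pb pb2; split; [exact: (ltn_trans h_b_b2 h_b2_c2) | exact: h_c2_c]) | by case: (d_c_c2 e) ]) | by case: (d_b_b3 e) ]) | (exfalso; apply: (H c3 b2 c2 h_c3_b2 h_b2_c2); rewrite pc3 pb2 pc2; split; [exact: (ltn_trans h_a3_a h_a_a2) | exact: (ltn_trans h_a2_b2 h_b2_c2)]) | by case: (d_a_a3 e) ]) | (case: (trich a a3) => [h_a_a3|[h_a3_a|e]]; [ (case: (trich b b3) => [h_b_b3|[h_b3_b|e]]; [ (exfalso; apply: (H a a3 c3 h_a_a3 (ltn_trans h_a3_b3 h_b3_c3)); rewrite pa pa3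 pc3; split; [exact: h_b_b3 | exact: h_b3_c3]) | (exfalso; apply: (H b3 b c3 h_b3_b h_b_c3); rewrite pb3 pb pc3; split; [exact: h_a3_b3 | exact: (ltn_trans h_b3_b h_b_c)]) | by case: (d_b_b3 e) ]) | (exfalso; apply: (H b3 b2 c2 (ltn_trans h_b3_c3 h_c3_b2) h_b2_c2); rewrite pb3 pb2 pc2; split; [exact: (ltn_trans h_a3_a h_a_a2) | exact: (ltn_trans h_a2_b2 h_b2_c2)]) | by case: (d_a_a3 e) ]) ]) | (case: C2 => [h_a3_b3 [h_b3_c3 [[pa3 [pb3 pc3]]|[pa3 [pc3 pb3]]]]]; [ (exfalso; apply: (H a a2 c2 h_a_a2 (ltn_trans h_a2_b2 h_b2_c2)); rewrite pa pa2 pc2; split; [exact: h_b_b2 | exact: h_b2_c2]) | (exfalso; apply: (H a a2 c2 h_a_a2 (ltn_trans h_a2_b2 h_b2_c2)); rewrite pa pa2 pc2; split; [exact: h_b_b2 | exact: h_b2_c2]) ]) ]) | (case: C1 => [h_a2_b2 [h_b2_c2 [[pa2 [pb2 pc2]]|[pa2 [pc2 pb2]]]]]; [ (case: C2 => [h_a3_b3 [h_b3_c3 [[pa3 [pb3 pc3]]|[pa3 [pc3 pb3]]]]]; [ (exfalso; apply: (H b b2 c2 h_b_b2 h_b2_c2); rewrite pb pb2 pc2; split; [exact: h_a_a2 | exact: (ltn_trans h_a2_b2 h_b2_c2)]) | (exfalso; apply: (H b b2 c2 h_b_b2 h_b2_c2); rewrite pb pb2 pc2; split; [exact: h_a_a2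 | exact: (ltn_trans h_a2_b2 h_b2_c2)]) ]) | (case: C2 => [h_a3_b3 [h_b3_c3 [[pa3 [pb3 pc3]]|[pa3 [pc3 pb3]]]]]; [ (case: (trich a a3) => [h_a_a3|[h_a3_a|e]]; [ (case: (trich b b3) => [h_b_b3|[h_b3_b|e]]; [ (exfalso; apply: (H b b3 c3 h_b_b3 h_b3_c3); rewrite pb pb3 pc3; split; [exact: h_a_a3 | exact: (ltn_trans h_a3_b3 h_b3_c3)]) | (exfalso; apply: (H a3 b3 c h_a3_b3 (ltn_trans h_b3_b h_b_c)); rewrite pa3 pb3 pc; split; [exact: h_b3_b | exact: h_b_c3]) | by case: (d_b_b3 e) ]) | (exfalso; apply: (H a3 a2 c2 (ltn_trans h_a3_a h_a_a2) (ltn_trans h_a2_b2 h_b2_c2)); rewrite pa3 pa2 pc2; split; [exact: (ltn_trans h_b3_c3 h_c3_b2) | exact: h_b2_c2]) | by case: (d_a_a3 e) ]) | (case: (trich a a3) => [h_a_a3|[h_a3_a|e]]; [ (case: (trich b b3) => [h_b_b3|[h_b3_b|e]]; [ (case: (trich c c2) => [h_c_c2|[h_c2_c|e]]; [ (case: (trich c c3) => [h_c_c3|[h_c3_c|e]]; [ (exfalso; apply: (H a a2 c2 h_a_a2 (ltn_trans h_a2_b2 h_b2_c2)); rewrite pa pa2 pc2; split; [exact: (ltn_trans h_c_c3 h_c3_b2) | exact: h_b2_c2]) | (exfalso; apply: (H b c3 c h_b_c3 h_c3_c); rewrite pb pc3 pc; split; [exact: h_a_b | exact: h_b_b3]) |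 by case: (d_c_c3 e) ]) | (exfalso; apply: (H b c2 c (ltn_trans h_b_b2 h_b2_c2) h_c2_c); rewrite pb pc2 pc; split; [exact: h_a_b | exact: h_b_b2]) | by case: (d_c_c2 e) ]) | (case: (trich c c2) => [h_c_c2|[h_c2_c|e]]; [ (case: (trich c c3) => [h_c_c3|[h_c3_c|e]]; [ (exfalso; apply: (H a a2 c2 h_a_a2 (ltn_trans h_a2_b2 h_b2_c2)); rewrite pa pa2 pc2; split; [exact: (ltn_trans h_c_c3 h_c3_b2) | exact: h_b2_c2]) | (case: (trich a2 b) => [h_a2_b|[h_b_a2|e]]; [ (case: (trich a2 a3) => [h_a2_a3|[h_a3_a2|e]]; [ (exfalso; apply: (H b c3 b2 h_b_c3 h_c3_b2); rewrite pb pc3 pb2; split; [exact: h_a_a2 | exact: (ltn_trans h_a2_a3 h_a3_b3)]) | (exfalso; apply: (H a3 a2 c2 h_a3_a2 (ltn_trans h_a2_b2 h_b2_c2)); rewrite pa3 pa2 pc2; split; [exact: h_c3_b2 | exact: h_b2_c2]) | by case: (d_a2_a3 e) ]) | (exfalso; apply: (H b a2 b2 h_b_a2 h_a2_b2); rewrite pb pa2 pb2; split; [exact: h_a_a2 | exact: (ltn_trans h_a2_b2 h_b2_c2)]) | by case: (d_b_a2 (esym e)) ]) | by case: (d_c_c3 e) ]) | (exfalso; apply: (H b c2 c (ltn_trans h_b_b2 h_b2_c2) h_c2_c); rewrite pb pc2 pc; split; [exact: h_a_b | exact: h_b_b2]) | by case: (d_c_c2 e) ]) | by case: (d_b_b3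 e) ]) | (exfalso; apply: (H a3 a2 c2 (ltn_trans h_a3_a h_a_a2) (ltn_trans h_a2_b2 h_b2_c2)); rewrite pa3 pa2 pc2; split; [exact: h_c3_b2 | exact: h_b2_c2]) | by case: (d_a_a3 e) ]) ]) ]) ]).
Qed.

Lemma k3 n (p : {perm 'I_n}) (H : avoids132 p) (a b c a2 b2 c2 a3 b3 c3 : 'I_n)
  (C0 : cyc p a b c) (C1 : cyc p a2 b2 c2) (C2 : cyc p a3 b3 c3)
  (D01 : disj a b c a2 b2 c2) (D02 : disj a b c a3 b3 c3) (D12 : disj a2 b2 c2 a3 b3 c3)
  (h_b_b2 : b < b2) (h_a_a2 : a < a2) (h_c_b3 : c < b3) (h_b3_c2 : b3 < c2) :
  False.
Proof.
unfold disj in *.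
case: D01 => [d_a_a2 [d_a_b2 [d_a_c2 [d_b_a2 [d_b_b2 [d_b_c2 [d_c_a2 [d_c_b2 d_c_c2]]]]]]]].
case: D02 => [d_a_a3 [d_a_b3 [d_a_c3 [d_b_a3 [d_b_b3 [d_b_c3 [d_c_a3 [d_c_b3 d_c_c3]]]]]]]].
case: D12 => [d_a2_a3 [d_a2_b3 [d_a2_c3 [d_b2_a3 [d_b2_b3 [d_b2_c3 [d_c2_a3 [d_c2_b3 d_c2_c3]]]]]]]].
(case: C0 => [h_a_b [h_b_c [[pa [pb pc]]|[pa [pc pb]]]]]; [ (case: C1 => [h_a2_b2 [h_b2_c2 [[pa2 [pb2 pc2]]|[pa2 [pc2 pb2]]]]]; [ (case: C2 => [h_a3_b3 [h_b3_c3 [[pa3 [pb3 pc3]]|[pa3 [pc3 pb3]]]]]; [ (case: (trich a a3) => [h_a_a3|[h_a3_a|e]]; [ (exfalso; apply: (H c b3 c3 h_c_b3 h_b3_c3); rewrite pc pb3 pc3; split; [exact: h_a_a3 | exact: (ltn_trans h_a3_b3 h_b3_c3)]) | (case: (trich a2 b) => [h_a2_b|[h_b_a2|e]]; [ (exfalso; apply: (H c b3 c2 h_c_b3 h_b3_c2); rewrite pc pb3 pc2; split; [exact: h_a_a2 | exact: (ltn_trans h_a2_b (ltn_trans h_b_c (ltn_trans h_c_b3 h_b3_c3)))]) | (exfalso; apply: (H a a2 c2 h_a_a2 (ltn_trans h_a2_b2 h_b2_c2)); rewrite pa pa2 pc2; split; [exact: h_b_a2 | exact: h_a2_b2]) |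 by case: (d_b_a2 (esym e)) ]) | by case: (d_a_a3 e) ]) | (case: (trich a a3) => [h_a_a3|[h_a3_a|e]]; [ (exfalso; apply: (H a a3 c3 h_a_a3 (ltn_trans h_a3_b3 h_b3_c3)); rewrite pa pa3 pc3; split; [exact: (ltn_trans h_b_c h_c_b3) | exact: h_b3_c3]) | (case: (trich a2 b) => [h_a2_b|[h_b_a2|e]]; [ (case: (trich b2 c) => [h_b2_c|[h_c_b2|e]]; [ (exfalso; apply: (H a b2 c3 (ltn_trans h_a_a2 h_a2_b2) (ltn_trans h_b2_c (ltn_trans h_c_b3 h_b3_c3))); rewrite pa pb2 pc3; split; [exact: (ltn_trans h_b_c h_c_b3) | exact: h_b3_c2]) | (exfalso; apply: (H a a2 b h_a_a2 h_a2_b); rewrite pa pa2 pb; split; [exact: h_b_c | exact: h_c_b2]) | by case: (d_c_b2 (esym e)) ]) | (exfalso; apply: (H a a2 c2 h_a_a2 (ltn_trans h_a2_b2 h_b2_c2)); rewrite pa pa2 pc2; split; [exact: h_b_a2 | exact: h_a2_b2]) | by case: (d_b_a2 (esym e)) ]) | by case: (d_a_a3 e) ]) ]) | (case: C2 => [h_a3_b3 [h_b3_c3 [[pa3 [pb3 pc3]]|[pa3 [pc3 pb3]]]]]; [ (exfalso; apply: (H a a2 c2 h_a_a2 (ltn_trans h_a2_b2 h_b2_c2)); rewrite pa pa2 pc2; split; [exact: h_b_b2 | exact: h_b2_c2]) | (exfalso; apply: (H a a2 c2 h_a_a2 (ltn_trans h_a2_b2 h_b2_c2)); rewrite pa pa2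 pc2; split; [exact: h_b_b2 | exact: h_b2_c2]) ]) ]) | (case: C1 => [h_a2_b2 [h_b2_c2 [[pa2 [pb2 pc2]]|[pa2 [pc2 pb2]]]]]; [ (case: C2 => [h_a3_b3 [h_b3_c3 [[pa3 [pb3 pc3]]|[pa3 [pc3 pb3]]]]]; [ (exfalso; apply: (H b b2 c2 h_b_b2 h_b2_c2); rewrite pb pb2 pc2; split; [exact: h_a_a2 | exact: (ltn_trans h_a2_b2 h_b2_c2)]) | (exfalso; apply: (H b b2 c2 h_b_b2 h_b2_c2); rewrite pb pb2 pc2; split; [exact: h_a_a2 | exact: (ltn_trans h_a2_b2 h_b2_c2)]) ]) | (case: C2 => [h_a3_b3 [h_b3_c3 [[pa3 [pb3 pc3]]|[pa3 [pc3 pb3]]]]]; [ (case: (trich a a3) => [h_a_a3|[h_a3_a|e]]; [ (exfalso; apply: (H b b3 c3 (ltn_trans h_b_c h_c_b3) h_b3_c3); rewrite pb pb3 pc3; split; [exact: h_a_a3 | exact: (ltn_trans h_a3_b3 h_b3_c3)]) | (case: (trich a2 b) => [h_a2_b|[h_b_a2|e]]; [ (case: (trich b2 c) => [h_b2_c|[h_c_b2|e]]; [ (exfalso; apply: (H b b3 c2 (ltn_trans h_b_c h_c_b3) h_b3_c2); rewrite pb pb3 pc2; split; [exact: (ltn_trans h_a_a2 h_a2_b2) | exact: (ltn_trans h_b2_c (ltn_trans h_c_b3 h_b3_c3))]) | (exfalso; apply: (H a a2 c2 h_a_a2 (ltn_trans h_a2_b2 h_b2_c2)); rewrite pa pa2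 pc2; split; [exact: h_c_b2 | exact: h_b2_c2]) | by case: (d_c_b2 (esym e)) ]) | (exfalso; apply: (H b a2 b2 h_b_a2 h_a2_b2); rewrite pb pa2 pb2; split; [exact: h_a_a2 | exact: (ltn_trans h_a2_b2 h_b2_c2)]) | by case: (d_b_a2 (esym e)) ]) | by case: (d_a_a3 e) ]) | (case: (trich a a3) => [h_a_a3|[h_a3_a|e]]; [ (exfalso; apply: (H a a3 c3 h_a_a3 (ltn_trans h_a3_b3 h_b3_c3)); rewrite pa pa3 pc3; split; [exact: h_c_b3 | exact: h_b3_c3]) | (case: (trich a2 b) => [h_a2_b|[h_b_a2|e]]; [ (exfalso; apply: (H a a2 c3 h_a_a2 (ltn_trans h_a2_b (ltn_trans h_b_c (ltn_trans h_c_b3 h_b3_c3)))); rewrite pa pa2 pc3; split; [exact: h_c_b3 | exact: h_b3_c2]) | (exfalso; apply: (H b a2 b2 h_b_a2 h_a2_b2); rewrite pb pa2 pb2; split; [exact: h_a_a2 | exact: (ltn_trans h_a2_b2 h_b2_c2)]) | by case: (d_b_a2 (esym e)) ]) | by case: (d_a_a3 e) ]) ]) ]) ]).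
Qed.

Lemma orb3 n (p : {perm 'I_n}) (H3 : only3cycles p) x :
  porbit p x =i [:: x; p x; p (p x)] /\ uniq [:: x; p x; p (p x)] /\ p (p (p x)) = x.
Proof.
have h := H3 x.
have U := uniq_traject_porbit p x.
have T := porbit_traject p x.
have I := iter_porbit p x.
rewrite h in U T I.
by split; [exact: T | split; [exact: U | exact: I]].
Qed.

Lemma porbit_eq n (p : {perm 'I_n}) x y : x \in porbit p y -> porbit p x = porbit p y.
Proof. by move=> h; apply/eqP; rewrite eq_porbit_mem. Qed.

Lemma classify n (p : {perm 'I_n}) (H3 : only3cycles p) x :
  exists a b c, cyc p a b c /\ porbit p x =i [set a; b; c] /\ x \in [set a; b; c].
Proof.
have [T [U I]] := orb3 H3 x.
move: U; rewrite /= !inE !negb_or => /and3P [/andP [n1 n2] n3 _].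
set v := p x in T n1 n2 n3 I *; set w := p v in T n1 n2 n3 I *.
have nx : (x : nat) != v by [].
have nv : (v : nat) != w by [].
have nw : (x : nat) != w by [].
have e : forall y, (y \in [:: x; v; w]) = (y == x) || (y == v) || (y == w).
  by move=> y; rewrite !inE orbA.
case: (ltngtP x v) => h1; last by rewrite h1 eqxx in nx.
- case: (ltngtP v w) => h2; last by rewrite h2 eqxx in nv.
  + exists x, v, w; split; first by rewrite /cyc; split; [|split; [|left; split; [|split]]].
    split; last by rewrite !inE eqxx ?orbT.
    by move=> y; rewrite T e !inE.
  + case: (ltngtP x w) => h3; last by rewrite h3 eqxx in nw.
    * exists x, w, v; split; first by rewrite /cyc; split; [|split; [|right; split; [|split]]].
      split; last by rewrite !inE eqxx ?orbT.
      by move=> y; rewrite T e !inE; case: (y == x); case: (y == v); case: (y == w).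
    * exists w, x, v; split; first by rewrite /cyc; split; [|split; [|left; split; [|split]]].
      split; last by rewrite !inE eqxx ?orbT.
      by move=> y; rewrite T e !inE; case: (y == x); case: (y == v); case: (y == w).
- case: (ltngtP v w) => h2; last by rewrite h2 eqxx in nv.
  + case: (ltngtP x w) => h3; last by rewrite h3 eqxx in nw.
    * exists v, x, w; split; first by rewrite /cyc; split; [|split; [|right; split; [|split]]].
      split; last by rewrite !inE eqxx ?orbT.
      by move=> y; rewrite T e !inE; case: (y == x); case: (y == v); case: (y == w).
    * exists v, w, x; split; first by rewrite /cyc; split; [|split; [|left; split; [|split]]].
      split; last by rewrite !inE eqxx ?orbT.
      by move=> y; rewrite T e !inE; case: (y == x); case: (y == v); case: (y == w).
  + exists w, v, x; split; first by rewrite /cyc; split; [|split; [|right; split; [|split]]].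
    split; last by rewrite !inE eqxx ?orbT.
    by move=> y; rewrite T e !inE; case: (y == x); case: (y == v); case: (y == w).
Qed.



Lemma in3 (T : finType) (x a b c : T) : x \in [set a; b; c] -> [\/ x = a, x = b | x = c].
Proof. by rewrite !inE -orbA => /or3P [/eqP|/eqP|/eqP]; [constructor 1|constructor 2|constructor 3]. Qed.

Lemma memB n (p : {perm 'I_n}) a b c x : cyc p a b c -> porbit p x =i [set a; b; c] ->
  x \in [set a; b; c] -> (x \in Bset p) = (x == b).
Proof.
move=> [hab [hbc _]] O xin; rewrite inE; apply/idP/eqP.
- move=> /andP [/existsP [y /andP [yin yx]] /existsP [z /andP [zin xz]]].
  rewrite O in yin; rewrite O in zin.
  case/in3: xin => ex; case/in3: yin => ey; case/in3: zin => ez;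
    subst; (reflexivity || (exfalso; lia)).
- move=> ex; subst x; apply/andP; split; apply/existsP; [exists a | exists c];
    by rewrite O !inE eqxx ?orbT /= ?hab ?hbc.
Qed.

Lemma memA n (p : {perm 'I_n}) a b c x : cyc p a b c -> porbit p x =i [set a; b; c] ->
  x \in [set a; b; c] -> (x \in Aset p) = (x == a).
Proof.
move=> [hab [hbc _]] O xin; rewrite inE; apply/idP/eqP.
- move=> /forall_inP h; have := h a; rewrite O !inE eqxx /= => /(_ isT) xa.
  case/in3: xin => ex; subst; (reflexivity || (exfalso; lia)).
- move=> ex; subst x; apply/forall_inP => y; rewrite O.
  case/in3 => ->; lia.
Qed.

Lemma memC n (p : {perm 'I_n}) a b c x : cyc p a b c -> porbit p x =i [set a; b; c] ->
  x \in [set a; b; c] -> (x \in Cset p) = (x == c).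
Proof.
move=> [hab [hbc _]] O xin; rewrite inE; apply/idP/eqP.
- move=> /forall_inP h; have := h c; rewrite O !inE eqxx ?orbT => /(_ isT) xa.
  case/in3: xin => ex; subst; (reflexivity || (exfalso; lia)).
- move=> ex; subst x; apply/forall_inP => y; rewrite O.
  case/in3 => ->; lia.
Qed.

Definition alpha n (p : {perm 'I_n}) (b : 'I_n) : 'I_n := if p b < b then p b else (p^-1)%g b.
Definition gamma n (p : {perm 'I_n}) (b : 'I_n) : 'I_n := if p b < b then (p^-1)%g b else p b.

Lemma cyc_ag n (p : {perm 'I_n}) a b c : cyc p a b c -> alpha p b = a /\ gamma p b = c.
Proof.
move=> [hab [hbc [[pa [pb pc]]|[pa [pc pb]]]]]; rewrite /alpha /gamma pb.
- by rewrite ltnNge (ltnW hbc) /= -pa permK.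
- by rewrite hab -pc permK.
Qed.

Lemma cycB n (p : {perm 'I_n}) (H3 : only3cycles p) y : y \in Bset p ->
  cyc p (alpha p y) y (gamma p y) /\ porbit p y =i [set alpha p y; y; gamma p y].
Proof.
have [a [b [c [C [O I]]]]] := classify H3 y.
rewrite (memB C O I) => /eqP ey; subst y.
by have [-> ->] := cyc_ag C.
Qed.

Lemma cycA n (p : {perm 'I_n}) (H3 : only3cycles p) y : y \in Aset p ->
  exists b, b \in Bset p /\ alpha p b = y.
Proof.
have [a [b [c [C [O I]]]]] := classify H3 y.
rewrite (memA C O I) => /eqP ey; subst y.
exists b; split; last by have [-> _] := cyc_ag C.
have bo : b \in porbit p a by rewrite O !inE eqxx ?orbT.
have O' : porbit p b =i [set a; b; c] by move=> z; rewrite (porbit_eq bo) O.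
by rewrite (memB C O') ?eqxx // !inE eqxx ?orbT.
Qed.

Lemma cycCl n (p : {perm 'I_n}) (H3 : only3cycles p) y : y \in Cset p ->
  exists b, b \in Bset p /\ gamma p b = y.
Proof.
have [a [b [c [C [O I]]]]] := classify H3 y.
rewrite (memC C O I) => /eqP ey; subst y.
exists b; split; last by have [_ ->] := cyc_ag C.
have bo : b \in porbit p c by rewrite O !inE eqxx ?orbT.
have O' : porbit p b =i [set a; b; c] by move=> z; rewrite (porbit_eq bo) O.
by rewrite (memB C O') ?eqxx // !inE eqxx ?orbT.
Qed.

Lemma sameB n (p : {perm 'I_n}) (H3 : only3cycles p) y1 y2 x :
  y1 \in Bset p -> y2 \in Bset p -> x \in porbit p y1 -> x \in porbit p y2 -> y1 = y2.
Proof.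
move=> B1 B2 x1 x2.
have E : porbit p y2 = porbit p y1 by rewrite -(porbit_eq x1) (porbit_eq x2).
have [C1 O1] := cycB H3 B1.
have O' : porbit p y2 =i [set alpha p y1; y1; gamma p y1] by move=> z; rewrite E O1.
have y2in : y2 \in [set alpha p y1; y1; gamma p y1] by rewrite -O' porbit_id.
by move: B2; rewrite (memB C1 O' y2in) => /eqP.
Qed.

Lemma disjB n (p : {perm 'I_n}) (H3 : only3cycles p) y1 y2 :
  y1 \in Bset p -> y2 \in Bset p -> y1 <> y2 ->
  disj (alpha p y1) y1 (gamma p y1) (alpha p y2) y2 (gamma p y2).
Proof.
move=> B1 B2 ne.
have [C1 O1] := cycB H3 B1; have [C2 O2] := cycB H3 B2.
have key : forall x1 x2, x1 \in porbit p y1 -> x2 \in porbit p y2 -> (x1 : nat) <> x2.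
  move=> x1 x2 h1 h2 /val_inj e; apply: ne; subst x2.
  exact: (sameB H3 B1 B2 h1 h2).
rewrite /disj; repeat split; apply: key;
  by [rewrite O1 !inE eqxx ?orbT | rewrite O2 !inE eqxx ?orbT].
Qed.

Lemma ltne n (x y : 'I_n) : x < y -> x <> y.
Proof. by move=> h e; rewrite e ltnn in h. Qed.

Lemma pwB_c n (p : {perm 'I_n}) (H : avoids132 p) (H3 : only3cycles p) y1 y2 :
  y1 \in Bset p -> y2 \in Bset p -> y1 < y2 -> gamma p y1 < gamma p y2.
Proof.
move=> B1 B2 lt.
have [C1 _] := cycB H3 B1; have [C2 _] := cycB H3 B2.
exact: (pw_c H C1 C2 (disjB H3 B1 B2 (ltne lt)) lt).
Qed.

Lemma pwB_i n (p : {perm 'I_n}) (H : avoids132 p) (H3 : only3cycles p) y1 y2 :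
  y1 \in Bset p -> y2 \in Bset p -> y1 < y2 -> alpha p y1 < alpha p y2 ->
  y2 < gamma p y1 /\ alpha p y2 < y1.
Proof.
move=> B1 B2 lt la.
have [C1 _] := cycB H3 B1; have [C2 _] := cycB H3 B2.
exact: (pw_i H C1 C2 (disjB H3 B1 B2 (ltne lt)) lt la).
Qed.

Lemma k2B n (p : {perm 'I_n}) (H : avoids132 p) (H3 : only3cycles p) y1 y2 z :
  y1 \in Bset p -> y2 \in Bset p -> y1 < y2 -> alpha p y1 < alpha p y2 ->
  z \in Cset p -> y1 < z -> z < y2 -> False.
Proof.
move=> B1 B2 lt la zC h1 h2.
have [y3 [B3 e3]] := cycCl H3 zC; subst z.
have [C1 _] := cycB H3 B1; have [C2 _] := cycB H3 B2; have [C3 _] := cycB H3 B3.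
have [i1 i2] := pwB_i H H3 B1 B2 lt la.
case: (eqVneq y3 y1) => [e|n1]; first by subst y3; lia.
case: (eqVneq y3 y2) => [e|n2]; first by subst y3; case: C2 => _ [? _]; lia.
have d13 : y1 <> y3 by move=> e; rewrite e eqxx in n1.
have d23 : y2 <> y3 by move=> e; rewrite e eqxx in n2.
exact: (k2 H C1 C2 C3 (disjB H3 B1 B2 (ltne lt)) (disjB H3 B1 B3 d13)
  (disjB H3 B2 B3 d23) lt la h1 h2).
Qed.

Lemma k3B n (p : {perm 'I_n}) (H : avoids132 p) (H3 : only3cycles p) y1 y2 y :
  y1 \in Bset p -> y2 \in Bset p -> y1 < y2 -> alpha p y1 < alpha p y2 ->
  y \in Bset p -> gamma p y1 < y -> y < gamma p y2 -> False.
Proof.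
move=> B1 B2 lt la B3 h1 h2.
have [C1 _] := cycB H3 B1; have [C2 _] := cycB H3 B2; have [C3 _] := cycB H3 B3.
have [i1 i2] := pwB_i H H3 B1 B2 lt la.
case: (eqVneq y y1) => [e|n1]; first by subst y; case: C1 => _ [? _]; lia.
case: (eqVneq y y2) => [e|n2]; first by subst y; lia.
have d13 : y1 <> y by move=> e; rewrite e eqxx in n1.
have d23 : y2 <> y by move=> e; rewrite e eqxx in n2.
exact: (k3 H C1 C2 C3 (disjB H3 B1 B2 (ltne lt)) (disjB H3 B1 B3 d13)
  (disjB H3 B2 B3 d23) lt la h1 h2).
Qed.



Definition rk n (S : {set 'I_n}) (y : nat) := #|[set z in S | z < y]|.

Lemma ltI_trans n : transitive (fun x y : 'I_n => x < y).
Proof. move=> y x z; exact: ltn_trans. Qed.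

Lemma se_mem n (S : {set 'I_n}) x : (x \in sorted_elems S) = (x \in S).
Proof. by rewrite /sorted_elems mem_filter mem_enum andbT. Qed.

Lemma se_uniq n (S : {set 'I_n}) : uniq (sorted_elems S).
Proof. exact: filter_uniq (enum_uniq _). Qed.

Lemma se_size n (S : {set 'I_n}) : size (sorted_elems S) = #|S|.
Proof.
rewrite -(card_uniqP (se_uniq S)); apply: eq_card => x; by rewrite se_mem.
Qed.

Lemma se_sorted n (S : {set 'I_n}) : sorted (fun x y : 'I_n => x < y) (sorted_elems S).
Proof.
apply: sorted_filter; first exact: ltI_trans.
have := iota_ltn_sorted 0 n; by rewrite -val_enum_ord sorted_map.
Qed.

Lemma idx_count n (s : seq 'I_n) y : sorted (fun x y : 'I_n => x < y) s -> y \in s ->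
  index y s = count (fun z : 'I_n => z < y) s.
Proof.
elim: s => [//|x s IH] /= srt; rewrite inE.
have all_x : all (fun z : 'I_n => x < z) s.
  exact: (order_path_min (@ltI_trans n) srt).
case: (eqVneq y x) => [->|ne] /= => [_|ys].
- rewrite ltnn add0n; apply/esym/eqP; rewrite -leqn0 leqNgt -has_count.
  apply/hasPn => z zs /=; rewrite -leqNgt; apply: ltnW; exact: (allP all_x z zs).
- rewrite (allP all_x y ys) add1n IH //; exact: path_sorted srt.
Qed.

Lemma card_count n (P : pred 'I_n) : #|[set z | P z]| = count P (enum 'I_n).
Proof.
rewrite cardsE cardE /enum_mem -size_filter; congr size.
by rewrite -filter_predI; apply: eq_filter => z; rewrite /= !inE andbT.
Qed.

Lemma rk_index n (S : {set 'I_n}) y : y \in S -> index y (sorted_elems S) = rk S y.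
Proof.
move=> yS; rewrite idx_count ?se_sorted ?se_mem // /rk /sorted_elems count_filter.
rewrite card_count; apply: eq_count => z; by rewrite /= andbC.
Qed.

Lemma rk_le n (S : {set 'I_n}) y1 y2 : y1 <= y2 -> rk S y1 <= rk S y2.
Proof.
move=> le; apply: subset_leq_card; apply/subsetP => z; rewrite !inE => /andP [-> h] /=.
exact: leq_trans h le.
Qed.

Lemma rk_lt n (S : {set 'I_n}) (y1 : 'I_n) y2 : y1 \in S -> y1 < y2 -> rk S y1 < rk S y2.
Proof.
move=> y1S lt; rewrite /rk.
have -> : #|[set z in S | z < y1]|.+1 = #|y1 |: [set z in S | z < y1]|.
  by rewrite cardsU1 !inE ltnn andbF.
apply: subset_leq_card; apply/subsetP => z; rewrite !inE => /orP [/eqP ->|/andP [-> h]].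
- by rewrite y1S.
- exact: ltn_trans h lt.
Qed.

Lemma rk_lt_inv n (S : {set 'I_n}) y1 (y2 : 'I_n) : y2 \in S -> rk S y1 < rk S y2 -> y1 < y2.
Proof.
move=> y2S h; rewrite ltnNge; apply/negP => le.
have := rk_le S le; rewrite leqNgt h //.
Qed.

Lemma nth_se n (S : {set 'I_n}) x0 t : t < #|S| ->
  nth x0 (sorted_elems S) t \in S /\ rk S (nth x0 (sorted_elems S) t) = t.
Proof.
move=> lt; have lt' : t < size (sorted_elems S) by rewrite se_size.
have m : nth x0 (sorted_elems S) t \in S by rewrite -se_mem mem_nth.
split => //; by rewrite -rk_index // index_uniq // se_uniq.
Qed.

Lemma rk_inj n (S : {set 'I_n}) x0 y t : y \in S -> rk S y = t -> y = nth x0 (sorted_elems S) t.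
Proof. move=> yS <-; by rewrite -rk_index // nth_index // se_mem. Qed.

Lemma card_rk_lt n (S : {set 'I_n}) (x0 : 'I_n) t : t <= #|S| -> #|[set y in S | rk S y < t]| = t.
Proof.
elim: t => [|t IH] le.
- apply/eqP; rewrite cards_eq0; apply/eqP/setP => y; by rewrite !inE ltn0 andbF.
have [m r] := nth_se x0 (le : t < #|S|).
have -> : [set y in S | rk S y < t.+1] = nth x0 (sorted_elems S) t |: [set y in S | rk S y < t].
  apply/setP => y; rewrite !inE ltnS leq_eqVlt.
  case: (eqVneq y (nth x0 (sorted_elems S) t)) => [->|ne] /=; first by rewrite m r eqxx.
  case yS : (y \in S) => //=; case: (eqVneq (rk S y) t) => [e|//].
  by rewrite (rk_inj x0 yS e) eqxx in ne.
by rewrite cardsU1 !inE r ltnn andbF IH // ltnW.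
Qed.

Lemma mem_block (T : eqType) (s : seq T) y x d : uniq s ->
  (y \in take x (drop d s)) = (y \in s) && (d <= index y s < d + x).
Proof.
move=> U; apply/idP/idP.
- move=> /(nthP y) [k]; rewrite size_take size_drop => hk.
  have kx : k < x by move: hk; case: ifP => h1 h2; lia.
  have kd : d + k < size s by move: hk; case: ifP => h1 h2; lia.
  rewrite nth_take // nth_drop => <-.
  by rewrite mem_nth // index_uniq //; lia.
- move=> /andP [ys /andP [h1 h2]].
  have -> : y = nth y (take x (drop d s)) (index y s - d).
    by rewrite nth_take ?nth_drop; [rewrite subnKC // nth_index | lia].
  apply: mem_nth; rewrite size_take size_drop; have := index_mem y s; rewrite ys.
  case: ifP; lia.
Qed.



Lemma sumn_comp l cur : sumn (comp_of l cur) = size l + cur.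
Proof.
elim: l cur => [|b l IH] cur /=; first by rewrite addn0.
case: b; rewrite /= IH; lia.
Qed.

Lemma comp_cut l cur j : 0 < j < size (comp_of l cur) ->
  cur <= sumn (take j (comp_of l cur)) /\ nth true l (sumn (take j (comp_of l cur)) - cur) = false.
Proof.
elim: l cur j => [|b l IH] cur j /=; first by case: j => [|[]].
case: b => /= hj.
- have [h1 h2] := IH cur.+1 j hj; split; first lia.
  have -> : sumn (take j (comp_of l cur.+1)) - cur = (sumn (take j (comp_of l cur.+1)) - cur.+1).+1 by lia.
  by [].
- case: j hj => [|[|j]] hj //=.
  + by split; [lia | rewrite /= take0 /= addn0 subnn].
  + have [h1 h2] := IH 1 j.+1 hj; split; first lia.
    have -> : cur + sumn (take j.+1 (comp_of l 1)) - cur = (sumn (take j.+1 (comp_of l 1)) - 1).+1 by lia.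
    by [].
Qed.

Lemma map_zeros (T : eqType) (s : seq T) (P : pred T) x0 :
  map (nth x0 s) (zeros_pos (map P s)) = filter (predC P) s.
Proof.
rewrite -[X in _ = filter _ X](mkseq_nth x0 s) /mkseq filter_map /zeros_pos size_map; congr map.
apply: eq_in_filter => q; rewrite mem_iota add0n => /andP [_ h] /=.
by rewrite (nth_map x0).
Qed.

Lemma map_ones (T : eqType) (s : seq T) (P : pred T) x0 :
  map (nth x0 s) (ones_pos (map P s)) = filter P s.
Proof.
rewrite -[X in _ = filter _ X](mkseq_nth x0 s) /mkseq filter_map /ones_pos size_map; congr map.
apply: eq_in_filter => q; rewrite mem_iota add0n => /andP [_ h] /=.
by rewrite (nth_map x0).
Qed.

Lemma zp_nth (T : eqType) (s : seq T) (P : pred T) x0 t : uniq s ->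
  t < size (filter (predC P) s) ->
  nth 0 (zeros_pos (map P s)) t = index (nth x0 (filter (predC P) s) t) s.
Proof.
move=> U lt; rewrite -(map_zeros s P x0) in lt *.
rewrite size_map in lt; rewrite (nth_map 0) // index_uniq //.
have : nth 0 (zeros_pos (map P s)) t \in zeros_pos (map P s) by rewrite mem_nth.
by rewrite mem_filter mem_iota size_map add0n => /andP [_ /andP [_ ->]].
Qed.

Lemma op_nth (T : eqType) (s : seq T) (P : pred T) x0 t : uniq s ->
  t < size (filter P s) ->
  nth 0 (ones_pos (map P s)) t = index (nth x0 (filter P s) t) s.
Proof.
move=> U lt; rewrite -(map_ones s P x0) in lt *.
rewrite size_map in lt; rewrite (nth_map 0) // index_uniq //.
have : nth 0 (ones_pos (map P s)) t \in ones_pos (map P s) by rewrite mem_nth.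
by rewrite mem_filter mem_iota size_map add0n => /andP [_ /andP [_ ->]].
Qed.

Lemma B_notC n (p : {perm 'I_n}) (H3 : only3cycles p) x : x \in Bset p -> x \notin Cset p.
Proof.
move=> xB; have [C O] := cycB H3 xB.
have xin : x \in [set alpha p x; x; gamma p x] by rewrite !inE eqxx ?orbT.
rewrite (memC C O xin); case: C => _ [h _]; apply/eqP => e.
by rewrite -e ltnn in h.
Qed.

Lemma filt_B n (p : {perm 'I_n}) (H3 : only3cycles p) :
  filter (predC (fun x => x \in Cset p)) (sorted_elems (Bset p :|: Cset p)) = sorted_elems (Bset p).
Proof.
rewrite /sorted_elems -filter_predI; apply: eq_filter => x /=; rewrite in_setU.
case xB : (x \in Bset p) => /=; last by case: (x \in Cset p).
by rewrite (negbTE (B_notC H3 xB)).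
Qed.

Lemma filt_C n (p : {perm 'I_n}) :
  filter (fun x => x \in Cset p) (sorted_elems (Bset p :|: Cset p)) = sorted_elems (Cset p).
Proof.
rewrite /sorted_elems -filter_predI; apply: eq_filter => x /=; rewrite in_setU.
by case: (x \in Cset p); rewrite ?orbT.
Qed.

Lemma semilength_B n (p : {perm 'I_n}) (H3 : only3cycles p) :
  semilength (dyck_word p) = #|Bset p|.
Proof.
by rewrite /semilength /dyck_word count_map -size_filter (filt_B H3) se_size.
Qed.

Lemma zD n (p : {perm 'I_n}) (H3 : only3cycles p) x0 t : t < #|Bset p| ->
  nth 0 (zeros_pos (dyck_word p)) t = rk (Bset p :|: Cset p) (nth x0 (sorted_elems (Bset p)) t).
Proof.
move=> lt; rewrite /dyck_word (@zp_nth _ _ _ x0) ?se_uniq ?(filt_B H3) ?se_size //.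
have [m _] := nth_se x0 lt.
by rewrite rk_index // in_setU m.
Qed.

Lemma oD n (p : {perm 'I_n}) x0 t : t < #|Cset p| ->
  nth 0 (ones_pos (dyck_word p)) t = rk (Bset p :|: Cset p) (nth x0 (sorted_elems (Cset p)) t).
Proof.
move=> lt; rewrite /dyck_word (@op_nth _ _ _ x0) ?se_uniq ?filt_C ?se_size //.
have [m _] := nth_se x0 lt.
by rewrite rk_index // in_setU m orbT.
Qed.



Lemma orb_of n (p : {perm 'I_n}) x y (S : {set 'I_n}) :
  porbit p y =i S -> x \in S -> porbit p x =i S.
Proof. move=> O xS z; rewrite -O in xS; by rewrite (porbit_eq xS) O. Qed.

Lemma gamma_C n (p : {perm 'I_n}) (H3 : only3cycles p) y : y \in Bset p -> gamma p y \in Cset p.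
Proof.
move=> yB; have [C O] := cycB H3 yB.
have xS : gamma p y \in [set alpha p y; y; gamma p y] by rewrite !inE eqxx ?orbT.
by rewrite (memC C (orb_of O xS) xS) eqxx.
Qed.

Lemma alpha_A n (p : {perm 'I_n}) (H3 : only3cycles p) y : y \in Bset p -> alpha p y \in Aset p.
Proof.
move=> yB; have [C O] := cycB H3 yB.
have xS : alpha p y \in [set alpha p y; y; gamma p y] by rewrite !inE eqxx ?orbT.
by rewrite (memA C (orb_of O xS) xS) eqxx.
Qed.

Lemma gamma_inj n (p : {perm 'I_n}) (H3 : only3cycles p) : {in Bset p &, injective (gamma p)}.
Proof.
move=> y1 y2 B1 B2 e.
have [_ O1] := cycB H3 B1; have [_ O2] := cycB H3 B2.
apply: (sameB H3 B1 B2 (x := gamma p y1)); first by rewrite O1 !inE eqxx ?orbT.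
by rewrite e O2 !inE eqxx ?orbT.
Qed.

Lemma alpha_inj n (p : {perm 'I_n}) (H3 : only3cycles p) : {in Bset p &, injective (alpha p)}.
Proof.
move=> y1 y2 B1 B2 e.
have [_ O1] := cycB H3 B1; have [_ O2] := cycB H3 B2.
apply: (sameB H3 B1 B2 (x := alpha p y1)); first by rewrite O1 !inE eqxx ?orbT.
by rewrite e O2 !inE eqxx ?orbT.
Qed.

Lemma cardC n (p : {perm 'I_n}) (H3 : only3cycles p) : #|Cset p| = #|Bset p|.
Proof.
suff -> : Cset p = gamma p @: Bset p by rewrite card_in_imset //; exact: gamma_inj.
apply/setP => z; apply/idP/imsetP.
- by move=> /(cycCl H3) [b [bB <-]]; exists b.
- by move=> [b bB ->]; exact: gamma_C.
Qed.

Lemma cardA n (p : {perm 'I_n}) (H3 : only3cycles p) : #|Aset p| = #|Bset p|.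
Proof.
suff -> : Aset p = alpha p @: Bset p by rewrite card_in_imset //; exact: alpha_inj.
apply/setP => z; apply/idP/imsetP.
- by move=> /(cycA H3) [b [bB <-]]; exists b.
- by move=> [b bB ->]; exact: alpha_A.
Qed.

Lemma rk_gamma n (p : {perm 'I_n}) (H : avoids132 p) (H3 : only3cycles p) y :
  y \in Bset p -> rk (Cset p) (gamma p y) = rk (Bset p) y.
Proof.
move=> yB; rewrite /rk.
have inj : {in [set z in Bset p | z < y] &, injective (gamma p)}.
  by move=> u v /setIdP [uB _] /setIdP [vB _]; exact: gamma_inj.
rewrite -(card_in_imset inj); apply: eq_card => z.
apply/setIdP/imsetP.
- move=> [/(cycCl H3) [b [bB <-]] lt]; exists b => //; apply/setIdP; split => //.
  case: (ltngtP b y) => // h.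
  + by have := pwB_c H H3 yB bB h; lia.
  + by move: h lt => /val_inj ->; rewrite ltnn.
- move=> [b /setIdP [bB lt] ->]; split; first exact: gamma_C.
  exact: pwB_c.
Qed.

Lemma sC_nth n (p : {perm 'I_n}) (H : avoids132 p) (H3 : only3cycles p) x0 t : t < #|Bset p| ->
  nth x0 (sorted_elems (Cset p)) t = gamma p (nth x0 (sorted_elems (Bset p)) t).
Proof.
move=> lt; have [m r] := nth_se x0 lt.
apply/esym/rk_inj; first exact: gamma_C.
by rewrite rk_gamma.
Qed.

Lemma rk_adj n (S : {set 'I_n}) (y y' : 'I_n) : y \in S -> y < y' ->
  (forall z : 'I_n, z \in S -> y < z -> z < y' -> False) -> rk S y' = (rk S y).+1.
Proof.
move=> yS lt nz; rewrite /rk.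
have -> : [set z in S | z < y'] = y |: [set z in S | z < y].
  apply/setP => z; rewrite !inE.
  case: (eqVneq z y) => [->|ne] /=; first by rewrite yS lt.
  case zS : (z \in S) => //=.
  case: (ltngtP z y) => h.
  - by rewrite (ltn_trans h lt).
  - by apply/negbTE/negP => h2; exact: nz z zS h h2.
  - by case/eqP: ne; apply: val_inj.
by rewrite cardsU1 !inE ltnn andbF.
Qed.

Lemma keylink n (p : {perm 'I_n}) (H : avoids132 p) (H3 : only3cycles p) y1 y2 t :
  y1 \in Bset p -> y2 \in Bset p -> y1 < y2 -> alpha p y1 < alpha p y2 ->
  rk (Bset p) y1 <= t -> t < rk (Bset p) y2 -> linked (dyck_word p) t.
Proof.
move=> B1 B2 lt la h1 h2.
set B := Bset p in B1 B2 h1 h2 *; set C := Cset p.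
have y2N : rk B y2 < #|B|.
  by rewrite -rk_index // -se_size index_mem se_mem.
have tN : t.+1 < #|B| by lia.
have tN' : t < #|B| by lia.
set u := nth y1 (sorted_elems B) t; set u' := nth y1 (sorted_elems B) t.+1.
have [uB ru] := nth_se y1 tN'; have [uB' ru'] := nth_se y1 tN.
rewrite -/u in uB ru; rewrite -/u' in uB' ru'.
have uu : u < u' by apply: (rk_lt_inv (S := B)) => //; rewrite ru ru'.
have y1u : y1 <= u by rewrite leqNgt; apply/negP => h; have := rk_lt uB h; lia.
have uy2 : u' <= y2 by rewrite leqNgt; apply/negP => h; have := rk_lt B2 h; lia.
have g1 : gamma p y1 <= gamma p u.
  case: (ltngtP y1 u) y1u => // h _; first by apply: ltnW; exact: pwB_c.
  by rewrite (val_inj h).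
have g2 : gamma p u' <= gamma p y2.
  case: (ltngtP u' y2) uy2 => // h _; first by apply: ltnW; exact: pwB_c.
  by rewrite (val_inj h).
have gu : gamma p u < gamma p u' by exact: pwB_c.
rewrite /linked (zD H3 y1 tN') (zD H3 y1 tN).
have tC : t < #|C| by rewrite /C (cardC H3).
have tC' : t.+1 < #|C| by rewrite /C (cardC H3).
rewrite (@oD _ p y1 t tC) (@oD _ p y1 t.+1 tC').
rewrite (sC_nth H H3 y1 tN') (sC_nth H H3 y1 tN) -/u -/u' -/B -/C.
apply/andP; split; apply/eqP; apply: rk_adj.
- by rewrite in_setU uB.
- exact: uu.
- move=> z; rewrite in_setU => /orP [zB|zC] h3 h4.
  + have := rk_lt uB h3; have := rk_lt zB h4; lia.
  + apply: (k2B H H3 B1 B2 lt la zC); lia.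
- by rewrite in_setU gamma_C ?orbT.
- exact: gu.
- move=> z; rewrite in_setU => /orP [zB|zC] h3 h4.
  + apply: (k3B H H3 B1 B2 lt la zB); lia.
  + have r1 : rk C (gamma p u) = t by rewrite /C (rk_gamma H H3 uB); exact: ru.
    have r2 : rk C (gamma p u') = t.+1 by rewrite /C (rk_gamma H H3 uB'); exact: ru'.
    have gC : gamma p u \in C := gamma_C H3 uB.
    have := rk_lt gC h3; have := rk_lt zC h4; lia.
Qed.



Lemma arith1 (u v w e : nat) : u = e -> u + v = w -> v = w - e.
Proof. lia. Qed.

Lemma arith2 (x y w : nat) : x + (1 + y) = w -> x + y + 1 = w.
Proof. lia. Qed.

Lemma arith3 (x y u w : nat) (b : bool) : x + u = w -> u = b + y -> b = true -> x + y + 1 = w.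
Proof. move=> h1 h2 h3; subst; lia. Qed.

Lemma card_rk_ge n (S : {set 'I_n}) (x0 : 'I_n) e : e <= #|S| ->
  #|[set y in S | e <= rk S y]| = #|S| - e.
Proof.
move=> le; have := cardsID [set y : 'I_n | rk S y < e] S.
have -> : S :&: [set y : 'I_n | rk S y < e] = [set y in S | rk S y < e].
  by apply/setP => y; rewrite !inE.
have -> : S :\: [set y : 'I_n | rk S y < e] = [set y in S | e <= rk S y].
  by apply/setP => y; rewrite !inE andbC ltnNge negbK.
move=> h; exact: (arith1 (card_rk_lt x0 le) h).
Qed.

Lemma card_above n (A : {set 'I_n}) (a : 'I_n) : a \in A ->
  rk A a + #|[set z in A | a < z]| + 1 = #|A|.
Proof.
move=> aA; have := cardsID [set z : 'I_n | z < a] A.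
have -> : A :&: [set z : 'I_n | z < a] = [set z in A | z < a] by apply/setP => y; rewrite !inE.
have -> : A :\: [set z : 'I_n | z < a] = a |: [set z in A | a < z].
  apply/setP => y; rewrite !inE; case: (ltngtP y a) => h.
  - by rewrite andbF orbC; case: eqP => // e; rewrite e ltnn in h.
  - by rewrite andbT; case: eqP => // e; rewrite e ltnn in h.
  - by move/val_inj: h => ->; rewrite aA eqxx.
move=> h; rewrite /rk; apply: (arith3 h (cardsU1 _ _)).
by rewrite !inE ltnn andbF.
Qed.

Lemma card_inj_le n (T U : {set 'I_n}) (f : 'I_n -> 'I_n) :
  {in T &, injective f} -> (forall y, y \in T -> f y \in U) -> #|T| <= #|U|.
Proof.
move=> inj h; rewrite -(card_in_imset inj); apply: subset_leq_card.
by apply/subsetP => z /imsetP [y yT ->]; exact: h.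
Qed.

Lemma cut_false (D : seq bool) N j :
  0 < j < size (comp_of [seq linked D i | i <- iota 0 N.-1] 1) ->
  linked D (sumn (take j (comp_of [seq linked D i | i <- iota 0 N.-1] 1)) - 1) = false.
Proof.
move=> hj; have [h1 h2] := comp_cut hj.
set t := sumn (take j _) - 1 in h2 *.
case: (ltnP t (size [seq linked D i | i <- iota 0 N.-1])) => lt.
- rewrite size_map in lt; move: h2; rewrite (nth_map 0) // nth_iota //.
  by rewrite size_iota in lt.
- by rewrite nth_default in h2.
Qed.

Lemma sumn_take_le (s : seq nat) j : sumn (take j s) <= sumn s.
Proof. by rewrite -{2}(cat_take_drop j s) sumn_cat leq_addr. Qed.

Theorem lemma4p3 (m : nat) (p : {perm 'I_(3 * m)}) :
  1 <= m ->
  avoids132 p ->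
  only3cycles p ->
  let X := free_comp (dyck_word p) in
  let k := size X in
  forall a b c : 'I_(3 * m),
    a < b -> b < c -> porbit p a = [set a; b; c] ->
    forall j : nat, 1 <= j <= k ->
      b \in block (sorted_elems (Bset p)) X j.-1 ->
      a \in block (sorted_elems (Aset p)) (rev X) (k - j).
Proof.
move=> hm H H3 X k a b c hab hbc horb j /andP [hj1 hjk] hb.
have [T [U I]] := orb3 H3 a.
have pa_in : p a \in [set a; b; c] by rewrite -horb T !inE eqxx ?orbT.
have ppa_in : p (p a) \in [set a; b; c] by rewrite -horb T !inE eqxx ?orbT.
move: U; rewrite /= !inE !negb_or => /and3P [/andP [n1 n2] n3 _].
have C0 : cyc p a b c.
  case/in3: pa_in => e1; first by rewrite e1 eqxx in n1.
  - case/in3: ppa_in => e2; first by rewrite e2 eqxx in n2.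
    + by rewrite e2 e1 eqxx in n3.
    + split; first done; split; first done; left; split; first done.
      by rewrite -e1 e2; split => //; rewrite -e2.
  - case/in3: ppa_in => e2; first by rewrite e2 eqxx in n2.
    + split; first done; split; first done; right; split; first done.
      by rewrite -e1 e2; split => //; rewrite -e2.
    + by rewrite e2 e1 eqxx in n3.
clear n1 n2 n3 T I pa_in ppa_in.
have Oa : porbit p a =i [set a; b; c] by move=> z; rewrite horb.
have bS : b \in [set a; b; c] by rewrite !inE eqxx ?orbT.
have aS : a \in [set a; b; c] by rewrite !inE eqxx ?orbT.
have bB : b \in Bset p by rewrite (memB C0 (orb_of Oa bS) bS) eqxx.
have aA : a \in Aset p by rewrite (memA C0 Oa aS) eqxx.
have ab : alpha p b = a by have [-> _] := cyc_ag C0.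
set N := #|Bset p|.
have N1 : 0 < N by apply/card_gt0P; exists b.
have hX : X = comp_of [seq linked (dyck_word p) i | i <- iota 0 N.-1] 1.
  by rewrite /X /free_comp semilength_B.
have sumX : sumn X = N by rewrite hX sumn_comp size_map size_iota; lia.
have NA : #|Aset p| = N by rewrite (cardA H3).
set s0 := sumn (take j.-1 X).
set x := nth 0 X j.-1.
set e := sumn (take j X).
have es : e = s0 + x.
  have jk : j.-1 < size X by rewrite -/k; lia.
  by rewrite /e -(prednK hj1) (take_nth 0 jk) -cats1 sumn_cat /= addn0.
have eN : e <= N by rewrite -sumX sumn_take_le.
move: hb; rewrite /block mem_block ?se_uniq // se_mem bB /= rk_index // -/s0 -/x.
move=> /andP [hs0 hxe].
rewrite /block mem_block ?se_uniq // se_mem aA /= rk_index //.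
have -> : nth 0 (rev X) (k - j) = x.
  rewrite nth_rev; last by rewrite -/k; lia.
  by rewrite -/k; congr nth; lia.
have -> : sumn (take (k - j) (rev X)) = N - e.
  rewrite take_rev sumn_rev -/k.
  have -> : k - (k - j) = j by lia.
  have := sumn_cat (take j X) (drop j X); rewrite cat_take_drop sumX -/e; lia.
have low : N - e <= rk (Aset p) a.
  rewrite -(card_rk_ge b eN).
  apply: (card_inj_le (f := alpha p) (U := [set z in Aset p | z < a])).
  - by move=> u v /setIdP [uB _] /setIdP [vB _]; exact: alpha_inj.
  - move=> y /setIdP [yB ey]; apply/setIdP; split; first exact: alpha_A.
    have by_ : b < y by apply: (rk_lt_inv yB); lia.
    case: (ltngtP (alpha p y) a) => // h.
    + exfalso.
      have jk : j < k.
        rewrite ltn_neqAle hjk andbT; apply/eqP => ejk.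
        have : e = N by rewrite /e ejk /k take_size.
        have : rk (Bset p) y < N by rewrite /N -rk_index // -se_size index_mem se_mem.
        move=> h1 h2; rewrite h2 in ey; have := leq_ltn_trans ey h1; by rewrite ltnn.
      have L : linked (dyck_word p) (e - 1).
        apply: (keylink H H3 bB yB by_); [by rewrite ab | lia | lia].
      have := @cut_false (dyck_word p) N j; rewrite -hX -/e.
      by rewrite L => /(_ ltac:(rewrite -/k; lia)).
    + by move: h => /val_inj h; rewrite -ab in h; have := alpha_inj H3 yB bB h => E;
        rewrite E ltnn in by_.
have up : s0 <= #|[set z in Aset p | a < z]|.
  have s0N : s0 <= N by lia.
  rewrite -{1}(card_rk_lt b s0N).
  apply: (card_inj_le (f := alpha p)).
  - by move=> u v /setIdP [uB _] /setIdP [vB _]; exact: alpha_inj.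
  - move=> y /setIdP [yB ey]; apply/setIdP; split; first exact: alpha_A.
    have yb : y < b by apply: (rk_lt_inv bB); lia.
    case: (ltngtP (alpha p y) a) => // h.
    + exfalso.
      have j1 : 0 < j.-1.
        rewrite lt0n; apply/eqP => ej; move: ey; rewrite /s0 ej take0 /=; lia.
      have L : linked (dyck_word p) (s0 - 1).
        apply: (keylink H H3 yB bB yb); [by rewrite ab | lia | lia].
      have := @cut_false (dyck_word p) N j.-1; rewrite -hX -/s0.
      by rewrite L => /(_ ltac:(rewrite -/k; lia)).
    + by move: h => /val_inj h; rewrite -ab in h; have := alpha_inj H3 yB bB h => E;
        rewrite E ltnn in yb.
have := card_above aA; rewrite NA; lia.
Qed.
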